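(* Let $n\ge1$. There exist constants $C>0$ and $\delta_0>0$ depending only on $n$ such that for every $0<\delta<\delta_0$, every $B\in M_\delta^+$ and every eigenvalue $\lambda$ of $B$, we have $\lambda\in N^+_{C\delta}$. In particular ${\rm Re}\,\lambda>0$.
   Context: Writing $z=x+iy$ with $x,y$ real: $N_\epsilon^+=\{z\in\mathbb C:|y|<\epsilon x\}$ and $M_\delta^+=\{z\in{\rm Mat}(n,\mathbb C): z^T=z,\ \delta x+y\text{ and }\delta x-y\text{ positive definite}\}$. *)

(* Defs.v *)
From HB Require Import structures.
From mathcomp Require Import all_boot all_order all_algebra.
From mathcomp Require Import reals.
From mathcomp.real_closed Require Import complex.
Set Implicit Arguments. Unset Strict Implicit. Unset Printing Implicit Defensive.
Import Order.TTheory GRing.Theory Num.Theory.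
Local Open Scope ring_scope.

Definition ReM (R : realType) (m n : nat) (z : 'M[complex R]_(m, n)) : 'M[R]_(m, n) :=
  map_mx (@complex.Re R) z.
Definition ImM (R : realType) (m n : nat) (z : 'M[complex R]_(m, n)) : 'M[R]_(m, n) :=
  map_mx (@complex.Im R) z.

Definition posdef (R : realType) (n : nat) (A : 'M[R]_n) : Prop :=
  A^T = A /\ forall v : 'cV[R]_n, v != 0 -> 0 < (v^T *m A *m v) 0 0.

Definition Nplus (R : realType) (eps : R) (z : complex R) : Prop :=
  `|complex.Im z| < eps * complex.Re z.

Definition Mplus (R : realType) (n : nat) (delta : R) (z : 'M[complex R]_n) : Prop :=
  z^T = z /\ posdef (delta *: ReM z + ImM z) /\ posdef (delta *: ReM z - ImM z).

(* Main.v *)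
Require Import Defs.
From HB Require Import structures.
From mathcomp Require Import all_boot all_order all_algebra.
From mathcomp Require Import reals.
From mathcomp.real_closed Require Import complex.
From mathcomp Require Import ring lra.
Import Order.TTheory GRing.Theory Num.Theory.
Local Open Scope ring_scope.

Section Aux.
Context {R : realType}.
Context {n : nat}.

Lemma Re_sum (F : 'I_n -> complex R) :
  complex.Re (\sum_i F i) = \sum_i complex.Re (F i).
Proof. by apply: (big_morph (@complex.Re R)) => // -[x1 y1] [x2 y2]. Qed.

Lemma Im_sum (F : 'I_n -> complex R) :
  complex.Im (\sum_i F i) = \sum_i complex.Im (F i).
Proof. by apply: (big_morph (@complex.Im R)) => // -[x1 y1] [x2 y2]. Qed.

Lemma ReMul (x y : complex R) :
  complex.Re (x * y) = complex.Re x * complex.Re y - complex.Im x * complex.Im y.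
Proof. by case: x; case: y. Qed.

Lemma ImMul (x y : complex R) :
  complex.Im (x * y) = complex.Re x * complex.Im y + complex.Im x * complex.Re y.
Proof. by case: x; case: y. Qed.

Definition L (M : 'I_n -> 'I_n -> R) (u : 'I_n -> R) j := \sum_i u i * M i j.
Definition beta (M : 'I_n -> 'I_n -> R) (u w : 'I_n -> R) := \sum_j L M u j * w j.
Definition dot (u w : 'I_n -> R) := \sum_j u j * w j.

Lemma beta_sym M u w : (forall i j, M i j = M j i) -> beta M u w = beta M w u.
Proof.
move=> sM; rewrite /beta /L.
under eq_bigr do rewrite mulr_suml.
rewrite exchange_big; apply: eq_bigr => i _; rewrite mulr_suml.
apply: eq_bigr => j _; rewrite sM; lra.
Qed.

Lemma dotC u w : dot u w = dot w u.
Proof. by apply: eq_bigr => j _; rewrite mulrC. Qed.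

Lemma beta_lin d s X Y u :
  beta (fun i j => d * X i j + s * Y i j) u u = d * beta X u u + s * beta Y u u.
Proof.
rewrite /beta /L !mulr_sumr -big_split; apply: eq_bigr => j _ /=.
rewrite !mulr_suml !mulr_sumr -big_split; apply: eq_bigr => i _ /=; lra.
Qed.

Lemma beta_eq f g u w : (forall j, L f u j = g j) -> beta f u w = \sum_j g j * w j.
Proof. by move=> h; apply: eq_bigr => j _; rewrite h. Qed.

Lemma quad_eq (P : 'M[R]_n) (u : 'I_n -> R) :
  (((\col_i u i)^T *m P) *m (\col_i u i)) 0 0 = beta (fun i j => P i j) u u.
Proof.
rewrite !mxE; apply: eq_bigr => j _; rewrite !mxE /L; congr (_ * _).
by apply: eq_bigr => i _; rewrite !mxE.
Qed.

End Aux.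

Lemma beta_ext {R : realType} {n : nat} (M M' : 'I_n -> 'I_n -> R) u w :
  (forall i j, M i j = M' i j) -> beta M u w = beta M' u w.
Proof.
move=> h; apply: eq_bigr => j _; congr (_ * _); apply: eq_bigr => i _; by rewrite h.
Qed.

Theorem proposition6p2 (R : realType) (n : nat) (hn : (1 <= n)%N) :
  exists C : R, exists delta0 : R, 0 < C /\ 0 < delta0 /\
    forall delta : R, 0 < delta -> delta < delta0 ->
    forall B : 'M[complex R]_n, Mplus delta B ->
    forall lambda : complex R, eigenvalue B lambda ->
      Nplus (C * delta) lambda /\ 0 < complex.Re lambda.
Proof.
exists 1, 1; split; first lra; split; first lra.
move=> d d0 _ B [BT [[_ Pp] [_ Pm]]] lam /eigenvalueP [v Hv v0].
pose a i := complex.Re (v 0 i); pose b i := complex.Im (v 0 i).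
pose X i j := complex.Re (B i j); pose Y i j := complex.Im (B i j).
pose lr := complex.Re lam; pose li := complex.Im lam.
have sB i j : B i j = B j i by rewrite -{1}BT mxE.
have sX i j : X i j = X j i by rewrite /X sB.
have sY i j : Y i j = Y j i by rewrite /Y sB.
have E1 j : L X a j - L Y b j = lr * a j - li * b j.
  have := congr1 (fun M : 'M[complex R]_(1,n) => complex.Re (M 0 j)) Hv; rewrite /= !mxE Re_sum ReMul.
  move=> <-; rewrite /L -sumrB; apply: eq_bigr => i _; rewrite ReMul.
  by rewrite /a /b /X /Y.
have E2 j : L Y a j + L X b j = lr * b j + li * a j.
  have := congr1 (fun M : 'M[complex R]_(1,n) => complex.Im (M 0 j)) Hv; rewrite /= !mxE Im_sum ImMul.
  move=> <-; rewrite /L -big_split; apply: eq_bigr => i _; rewrite ImMul.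
  by rewrite /a /b /X /Y /=.
have F1 w : beta X a w - beta Y b w = lr * dot a w - li * dot b w.
  rewrite /beta /dot -sumrB !mulr_sumr -sumrB; apply: eq_bigr => j _.
  rewrite -mulrBl E1; ring.
have F2 w : beta Y a w + beta X b w = lr * dot b w + li * dot a w.
  rewrite /beta /dot -big_split !mulr_sumr -big_split; apply: eq_bigr => j _ /=.
  transitivity ((L Y a j + L X b j) * w j); first ring.
  rewrite E2; ring.
have G1 : beta X a a + beta X b b = lr * (dot a a + dot b b).
  have := F1 a; have := F2 b; rewrite (beta_sym Y b a sY) (dotC b a); lra.
have G2 : beta Y a a + beta Y b b = li * (dot a a + dot b b).
  have := F1 b; have := F2 a; rewrite (beta_sym X b a sX) (dotC b a); lra.
have nz : (\col_i a i != 0) || (\col_i b i != 0).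
  rewrite -negb_and; apply/negP => /andP [/eqP ha /eqP hb]; move/negP: v0; apply.
  apply/eqP/rowP => j.
  move: (congr1 (fun M : 'cV[R]_n => M j 0) ha) (congr1 (fun M : 'cV[R]_n => M j 0) hb).
  rewrite !mxE /a /b; case: (v 0 j) => x y /= -> ->; by [].
have pos (P : 'M[R]_n) (s : R) : (forall i j, P i j = d * X i j + s * Y i j) ->
    (forall u : 'cV_n, u != 0 -> 0 < (u^T *m P *m u) 0 0) ->
    0 < (d * lr + s * li) * (dot a a + dot b b).
  move=> hP hpos.
  have qe u : ((\col_i u i)^T *m P *m \col_i u i) 0 0 = d * beta X u u + s * beta Y u u.
    by rewrite quad_eq -beta_lin; apply: beta_ext.
  have ge u : 0 <= d * beta X u u + s * beta Y u u.
    rewrite -qe; case: (eqVneq (\col_i u i) 0) => [h|h].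
      by rewrite h !(mul0mx, mulmx0, trmx0) mxE.
    exact: ltW (hpos _ h).
  have -> : (d * lr + s * li) * (dot a a + dot b b) =
     (d * beta X a a + s * beta Y a a) + (d * beta X b b + s * beta Y b b).
    have e1 : d * (lr * (dot a a + dot b b)) + s * (li * (dot a a + dot b b)) =
      (d * lr + s * li) * (dot a a + dot b b) by ring.
    rewrite -e1 -G1 -G2; ring.
  case/orP: nz => h.
    apply: (@lt_le_trans _ _ (d * beta X a a + s * beta Y a a)); last by rewrite lerDl.
    by rewrite -qe; apply: hpos.
  apply: (@lt_le_trans _ _ (d * beta X b b + s * beta Y b b)); last by rewrite lerDr.
  by rewrite -qe; apply: hpos.
have Hp : 0 < (d * lr + 1 * li) * (dot a a + dot b b).
  by apply: (pos _ 1 _ Pp) => i j; rewrite !mxE /X /Y mul1r.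
have Hm : 0 < (d * lr + (-1) * li) * (dot a a + dot b b).
  by apply: (pos _ (-1) _ Pm) => i j; rewrite !mxE /X /Y mulN1r.
have N0 : 0 <= dot a a + dot b b.
  by apply: addr_ge0; apply: sumr_ge0 => j _; rewrite -expr2 sqr_ge0.
have Np : 0 < dot a a + dot b b.
  rewrite lt_neqAle N0 andbT; apply/eqP => h; move: Hp; rewrite -h mulr0 ltxx.
  by [].
rewrite pmulr_lgt0 // in Hp; rewrite pmulr_lgt0 // in Hm.
rewrite /Nplus -/lr -/li ltr_norml.
have lrp : 0 < lr.
  have : 0 < d * lr by lra.
  by rewrite pmulr_rgt0.
split=> //; apply/andP; split; lra.
Qed.
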